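(* Let $\Omega\subset\mathbb R^d$ be bounded, $X=H=L^2(\Omega)$, $T=\mathrm{Id}$, and $J=S|_{L^2(\Omega)}$ the negative Boltzmann–Shannon entropy restricted to $L^2(\Omega)$. Let $(\lambda_n)_{n\ge0}$ be an increasing sequence of positive numbers and let $x^\dagger\in L^2(\Omega)$ satisfy $0\le x^\dagger(t)<1/e$ for all $t$ in a set $E\subset\Omega$ of positive measure. Let $x_n$ be the MHDM iterates with data $f=x^\dagger$ and penalty $S$. Then for almost every $t\in E$ and all $n\in\mathbb N$, $$x_n(t)>x_{n-1}(t)>\dots>x_0(t)>x^\dagger(t).$$
   Context: $S(x)=\int_\Omega x\log x\,dt$ if $x\ge0$ a.e. and $x\log x\in L^1(\Omega)$, $S(x)=\infty$ otherwise ($0\log0=0$). MHDM with $T=\mathrm{Id}$: $u_0=\arg\min_u\frac{\lambda_0}{2}\|u-x^\dagger\|_{L^2}^2+S(u)$, $x_0=u_0$; for $n\ge1$, $u_n=\arg\min_u\frac{\lambda_n}{2}\|x^\dagger-x_{n-1}-u\|_{L^2}^2+S(u)$, $x_n=x_{n-1}+u_n$ (the minimizers are unique). *)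

(* Defs.v *)
From mathcomp Require Import all_boot all_order all_algebra.
From mathcomp Require Import all_classical all_reals all_analysis.
Set Implicit Arguments. Unset Strict Implicit. Unset Printing Implicit Defensive.
Import Order.TTheory GRing.Theory Num.Theory.
Local Open Scope classical_set_scope.
Local Open Scope ring_scope.

Definition inL2 {d} {T : measurableType d} {R : realType}
  (mu : {measure set T -> \bar R}) (Om : set T) (f : T -> R) : Prop :=
  measurable_fun Om f /\ mu.-integrable Om (fun t => ((f t) ^+ 2)%:E).

Definition L2sq {d} {T : measurableType d} {R : realType}
  (mu : {measure set T -> \bar R}) (Om : set T) (f : T -> R) : \bar R :=
  (\int[mu]_(t in Om) ((f t) ^+ 2)%:E)%E.

(* negative Boltzmann-Shannon entropy: int u log u if u >= 0 a.e. and
   u log u in L^1, +oo otherwise (ln 0 = 0 in mathcomp, so 0 log 0 = 0) *)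
Definition entropyS {d} {T : measurableType d} {R : realType}
  (mu : {measure set T -> \bar R}) (Om : set T) (u : T -> R) : \bar R :=
  if pselect ({ae mu, forall t, Om t -> 0 <= u t} /\
              mu.-integrable Om (fun t => (u t * ln (u t))%:E))
  then (\int[mu]_(t in Om) (u t * ln (u t))%:E)%E
  else +oo%E.

Definition isMinL2 {d} {T : measurableType d} {R : realType}
  (mu : {measure set T -> \bar R}) (Om : set T)
  (F : (T -> R) -> \bar R) (u : T -> R) : Prop :=
  inL2 mu Om u /\ forall v, inL2 mu Om v -> (F u <= F v)%E.

Definition MHDM_iterates {d} {T : measurableType d} {R : realType}
  (mu : {measure set T -> \bar R}) (Om : set T) (lam : nat -> R) (f : T -> R)
  (u x : nat -> T -> R) : Prop :=
  isMinL2 mu Om (fun v => ((lam 0%N / 2)%:E * L2sq mu Om (fun t => (v t - f t)%R)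
                            + entropyS mu Om v)%E) (u 0%N)
  /\ x 0%N = u 0%N
  /\ (forall n, isMinL2 mu Om
        (fun v => ((lam n.+1 / 2)%:E * L2sq mu Om (fun t => (f t - x n t - v t)%R)
                   + entropyS mu Om v)%E) (u n.+1))
  /\ (forall n, x n.+1 = x n \+ u n.+1).

(* Main.v *)
Require Import Defs.
From mathcomp Require Import all_boot all_order all_algebra.
From mathcomp Require Import all_classical all_reals all_analysis.
From mathcomp Require Import ring lra measurable_realfun.
Import Order.TTheory GRing.Theory Num.Theory.
Local Open Scope classical_set_scope.
Local Open Scope ring_scope.
Set Implicit Arguments. Unset Strict Implicit.


Section RealFacts.
Variable R : realType.
Implicit Types x y a b : R.

Lemma ln_le_sub1 {y} : 0 < y -> ln y <= y - 1.
Proof. move=> y0; have := @le_ln1Dx R (y - 1); have -> : 1 + (y - 1) = y by ring. apply; lra. Qed.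

Lemma xlnx_bound x : `|x * ln x| <= x ^+ 2 + 1.
Proof.
have [x0|x0] := leP x 0; first by rewrite ln0 // mulr0 normr0; nra.
have h1 := ln_le_sub1 x0.
have h2 : ln (x^-1) <= x^-1 - 1 by apply: ln_le_sub1; rewrite invr_gt0.
rewrite lnV ?posrE // in h2.
have h3 : x * x^-1 = 1 by rewrite mulfV // gt_eqF.
rewrite ler_norml; apply/andP; split; nra.
Qed.

Lemma xlnx_conv a b : 0 <= a -> 0 < b ->
  b * ln b - a * ln a <= (b - a) * (ln b + 1).
Proof.
move=> a0 b0; have [->|ap] := eqVneq a 0; first by rewrite mul0r subr0 subr0; nra.
have ap' : 0 < a by rewrite lt_neqAle eq_sym ap.
have h := ln_le_sub1 (divr_gt0 b0 ap').
rewrite ln_div ?posrE // in h.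
have h3 : a * (b / a) = b by rewrite mulrC divfK.
have : a * (ln b - ln a) <= a * (b / a - 1) by rewrite ler_pM2l.
nra.
Qed.

Lemma ln_le_tangent {y} : 0 < y -> ln y <= expR 1 * y - 2.
Proof.
move=> y0; have := ln_le_sub1 (mulr_gt0 (expR_gt0 1) y0).
rewrite lnM ?posrE ?expR_gt0 // expRK; lra.
Qed.

Lemma pt_zero (a K h u : R) : 0 < a -> `|h| <= K -> u = 0 ->
  a / 2 * (u + expR (-(a / 2 + a * K + 1)) - h) ^+ 2
  + (u + expR (-(a / 2 + a * K + 1))) * ln (u + expR (-(a / 2 + a * K + 1)))
  <= a / 2 * (u - h) ^+ 2 + u * ln u - expR (-(a / 2 + a * K + 1)).
Proof.
move=> a0 hK ->; rewrite !add0r mul0r addr0 expRK.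
set e := expR _.
have e0 : 0 < e := expR_gt0 _.
have K0 : 0 <= K := le_trans (normr_ge0 _) hK.
have e1 : e <= 1.
  rewrite /e -[leRHS]expR0 ler_expR; have := mulr_ge0 (ltW a0) K0; lra.
move: hK; rewrite ler_norml => /andP[h1 h2].
have t1 : a * e * (- h) <= a * e * K by rewrite ler_pM2l ?mulr_gt0 //; lra.
have t2 : a * e * e <= a * e * 1 by rewrite ler_pM2l ?mulr_gt0.
nra.
Qed.

Lemma expR1N1 : expR 1 * expR (-1) = 1 :> R.
Proof. by rewrite -expRD subrr expR0. Qed.

Lemma pt_pos (a δ u h : R) : 0 < a -> 0 < δ -> 0 <= u -> u <= h ->
  h <= expR (-1) - δ ->
  a / 2 * (u + δ / (2 * (1 + a)) - h) ^+ 2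
  + (u + δ / (2 * (1 + a))) * ln (u + δ / (2 * (1 + a)))
  <= a / 2 * (u - h) ^+ 2 + u * ln u - δ / (2 * (1 + a)) * δ / 4.
Proof.
move=> a0 d0 u0 uh hd.
set eps := δ / (2 * (1 + a)).
have ee : eps * (2 * (1 + a)) = δ by rewrite /eps divfK //; apply/lt0r_neq0; lra.
have e0 : 0 < eps by rewrite /eps divr_gt0 //; lra.
have E1 : 2 <= expR 1 :> R by have := @expR_ge1Dx R 1; lra.
have EE := expR1N1.
have up : 0 < u + eps by lra.
have cv := xlnx_conv u0 up.
have tg := ln_le_tangent up.
set L := ln (u + eps) in cv tg *.
have q1 : expR 1 * (u + eps) <= expR 1 * (expR (-1) - δ + eps).
  by rewrite ler_pM2l ?expR_gt0 //; lra.
have q2 : expR 1 * (eps - δ) <= eps - δ.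
  have : eps - δ <= 0 by nra.
  move=> h0; have : (expR 1 - 1) * (eps - δ) <= 0 by apply: mulr_ge0_le0; lra.
  lra.
have q3 : eps * (L + 1) <= eps * (eps - δ).
  rewrite ler_pM2l //; nra.
have q4 : a * eps <= δ / 2 by nra.
have q5 : a * eps * eps <= δ / 2 * eps by rewrite ler_pM2r.
have p1 : a * eps * (u - h) <= 0 by apply: mulr_ge0_le0; [apply: mulr_ge0; lra|lra].
have p2 : eps * eps <= eps * (δ / 2) by rewrite ler_pM2l //; nra.
have uu : u + eps - u = eps by ring.
rewrite uu in cv.
have sq : forall x : R, a / 2 * (u + x - h) ^+ 2 = a / 2 * (u - h) ^+ 2 + a * x * (u - h) + a * x * x / 2 by move=> x; field.
rewrite sq; lra.
Qed.
End RealFacts.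


Section L2.
Context d (T : measurableType d) (R : realType) (mu : {measure set T -> \bar R})
  (Om : set T) (mOm : measurable Om) (finOm : (mu Om < +oo)%E).

Lemma int_cst (k : R) : mu.-integrable Om (fun _ => k%:E).
Proof.
apply/integrableP; split; first exact: measurable_cst.
rewrite (eq_integral (cst `|k|%:E)); last by move=> t _.
by rewrite integral_cst // lte_mul_pinfty.
Qed.

Lemma inL2_le (f b : T -> R) : measurable_fun Om f ->
  mu.-integrable Om (fun t => (b t)%:E) ->
  (forall t, Om t -> f t ^+ 2 <= b t) -> inL2 mu Om f.
Proof.
move=> mf ib fb; split => //; apply: le_integrable ib => //.
  have H1 := (@measurable_funX _ _ _ _ _ 2 mf). have H2 := @EFin_measurable R setT. exact: (measurableT_comp H2 H1).
move=> t Ot; rewrite !gee0_abs ?lee_fin ?fb //; last exact: sqr_ge0.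
exact: le_trans (sqr_ge0 _) (fb t Ot).
Qed.

Lemma inL2D f g : inL2 mu Om f -> inL2 mu Om g -> inL2 mu Om (f \+ g).
Proof.
move=> [mf if2] [mg ig2].
apply: (@inL2_le _ (fun t => 2 * f t ^+ 2 + 2 * g t ^+ 2)).
- exact: measurable_funD.
- have := integrableD mOm (integrableZl mOm 2 if2) (integrableZl mOm 2 ig2).
  by apply: (eq_integrable mOm) => t _ /=; rewrite EFinD !EFinM.
- move=> t _ /=; have := sqr_ge0 (f t - g t); lra.
Qed.

Lemma inL2N f : inL2 mu Om f -> inL2 mu Om (fun t => - f t).
Proof.
move=> [mf if2]; split; first exact: measurable_funN.
by apply: (eq_integrable mOm) if2 => t _; rewrite sqrrN.
Qed.

Lemma inL2_bnd (f : T -> R) (M : R) : measurable_fun Om f ->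
  (forall t, Om t -> `|f t| <= M) -> inL2 mu Om f.
Proof.
move=> mf fM; apply: (@inL2_le _ (fun _ => M ^+ 2)) => //; first exact: int_cst.
move=> t Ot; have := fM t Ot; rewrite ler_norml => /andP[h1 h2]; nra.
Qed.

Lemma xlnx_int w : inL2 mu Om w -> mu.-integrable Om (fun t => (w t * ln (w t))%:E).
Proof.
move=> [mw iw2].
have := integrableD mOm iw2 (int_cst 1).
apply: le_integrable => //.
  have Hm : measurable_fun Om (fun t => w t * ln (w t)).
    by apply: measurable_funM => //; exact: measurableT_comp (@measurable_ln R) mw.
  exact: (measurableT_comp (@EFin_measurable R setT) Hm).
move=> t _; have -> : ((w t ^+ 2)%:E + 1 = (w t ^+ 2 + 1)%:E)%E by [].
rewrite !abse_EFin lee_fin (ger0_norm (_ : 0 <= w t ^+ 2 + 1)) ?xlnx_bound //; nra.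
Qed.

End L2.


Section Core.
Context d (T : measurableType d) (R : realType) (mu : {measure set T -> \bar R})
  (Om : set T) (mOm : measurable Om) (finOm : (mu Om < +oo)%E).

Definition Gi (a : R) (h w : T -> R) t := a / 2 * (w t - h t) ^+ 2 + w t * ln (w t).
Definition Fn (a : R) (h w : T -> R) :=
  ((a / 2)%:E * L2sq mu Om (fun t => (w t - h t)%R) + entropyS mu Om w)%E.

Lemma int_Gi a h w : inL2 mu Om h -> inL2 mu Om w ->
  mu.-integrable Om (fun t => (Gi a h w t)%:E).
Proof.
move=> ih iw.
have iq := (inL2D mOm iw (inL2N mOm ih)).2.
have := integrableD mOm (integrableZl mOm (a / 2) iq) (xlnx_int mOm finOm iw).
by apply: (eq_integrable mOm) => t _; rewrite /Gi /= EFinD EFinM.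
Qed.

Lemma Fn_split a h w : inL2 mu Om h -> inL2 mu Om w ->
  {ae mu, forall t, Om t -> 0 <= w t} ->
  Fn a h w = (\int[mu]_(t in Om) (Gi a h w t)%:E)%E.
Proof.
move=> ih iw aew.
have iq := (inL2D mOm iw (inL2N mOm ih)).2.
have ix := xlnx_int mOm finOm iw.
rewrite /Fn /entropyS; case: pselect => [Hp|Hn]; last by exfalso; apply: Hn; split.
rewrite /L2sq -integralZl // -integralD //.
exact: integrableZl.
Qed.

Lemma Fn_lt_ae a h w : 0 <= a -> (Fn a h w < +oo)%E ->
  {ae mu, forall t, Om t -> 0 <= w t}.
Proof.
move=> a0; rewrite /Fn /entropyS; case: pselect => [[Hp1 Hp2] _|Hn] //.
rewrite addey ?ltxx //.
have : (0 <= (a / 2)%:E * L2sq mu Om (fun t => (w t - h t)%R))%E.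
  apply: mule_ge0; first by rewrite lee_fin; lra.
  by apply: integral_ge0 => t _; rewrite lee_fin sqr_ge0.
by case: (_ * _)%E.
Qed.

Lemma int_ind (k : R) (A : set T) : measurable A ->
  mu.-integrable Om (fun t => (k * \1_A t)%:E).
Proof.
move=> mA; apply: (le_integrable mOm) (int_cst mOm finOm `|k|).
  have Hm : measurable_fun Om (fun t => k * \1_A t :> R).
    by apply: measurable_funM; [exact: measurable_cst|exact: measurable_indic].
  exact: (measurableT_comp (@EFin_measurable R setT) Hm).
move=> t _; rewrite !abse_EFin lee_fin indicE normr_id.
by case: (t \in A); rewrite ?mulr1 ?mulr0 ?normr0 // normr_ge0.
Qed.

Lemma min_ae a h u : 0 < a -> inL2 mu Om h -> isMinL2 mu Om (Fn a h) u ->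
  {ae mu, forall t, Om t -> 0 <= u t}.
Proof.
move=> a0 ih [iu umin].
have i0 : inL2 mu Om (fun _ => 0).
  by apply: (@inL2_bnd _ _ _ _ _ mOm finOm _ 0) => [|t _]; [exact: measurable_cst|rewrite normr0].
have F0 : (Fn a h (fun _ => 0%R) < +oo)%E.
  rewrite Fn_split //; last exact: aeW.
  exact: integrable_lty (int_Gi _ ih i0).
exact: Fn_lt_ae (ltW a0) (le_lt_trans (umin _ i0) F0).
Qed.

Lemma mset_bool (b : T -> bool) : measurable_fun Om b -> measurable (Om `&` [set t | b t]).
Proof. by move=> mb; apply: (mb mOm [set true]). Qed.

Lemma perturb a h u (A : set T) eps c : 0 < a -> inL2 mu Om h ->
  isMinL2 mu Om (Fn a h) u -> measurable A -> A `<=` Om -> 0 < eps -> 0 < c ->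
  (forall t, A t -> a / 2 * (u t + eps - h t) ^+ 2 + (u t + eps) * ln (u t + eps)
     <= Gi a h u t - c) -> mu A = 0%E.
Proof.
move=> a0 ih [iu umin] mA AO e0 c0 hA.
have i0 : inL2 mu Om (fun _ => 0).
  by apply: (@inL2_bnd _ _ _ _ _ mOm finOm _ 0) => [|t _]; [exact: measurable_cst|rewrite normr0].
have F0 : (Fn a h (fun _ => 0%R) < +oo)%E.
  rewrite Fn_split //; last exact: aeW.
  exact: integrable_lty (int_Gi _ ih i0).
have aeu := Fn_lt_ae (ltW a0) (le_lt_trans (umin _ i0) F0).
pose v := fun t => u t + eps * \1_A t.
have m1 : measurable_fun Om (fun t => eps * \1_A t :> R).
  by apply: measurable_funM; [exact: measurable_cst|exact: measurable_indic].
have b1 : forall t, `|eps * \1_A t| <= eps.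
  by move=> t; rewrite indicE; case: (t \in A); rewrite ?mulr1 ?mulr0 ?normr0 ?gtr0_norm // ltW.
have iv : inL2 mu Om v.
  exact: (inL2D mOm iu (inL2_bnd mOm finOm m1 (fun t _ => b1 t))).
have aev : {ae mu, forall t, Om t -> 0 <= v t}.
  apply: filterS aeu => t ht Ot; rewrite /v; have := ht Ot.
  have : 0 <= eps * \1_A t by rewrite indicE; case: (t \in A); rewrite ?mulr1 ?mulr0 // ltW.
  lra.
have := umin v iv; rewrite !Fn_split //.
have ic := int_ind c mA.
have iGu := int_Gi a ih iu.
have le1 : (\int[mu]_(t in Om) (Gi a h v t)%:E <=
    \int[mu]_(t in Om) ((Gi a h u t)%:E - (c * \1_A t)%:E))%E.
  apply: le_integral => //; first exact: int_Gi.
    exact: (integrableB mOm iGu ic).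
  move=> t /[!inE] Ot; rewrite -EFinB lee_fin /Gi /v indicE.
  have [At|nAt] := boolP (t \in A).
    rewrite !mulr1; have := hA t (set_mem At); rewrite /Gi; lra.
  by rewrite !mulr0 !addr0 subr0.
rewrite (integralB_EFin mOm iGu ic) in le1.
have Ic : (\int[mu]_(t in Om) (c * \1_A t)%:E = c%:E * mu A)%E.
  under eq_integral do rewrite EFinM.
  rewrite integralZl //; first by rewrite integral_indic // setIidl.
  by apply: (eq_integrable mOm) (int_ind 1 mA) => t _; rewrite mul1r.
rewrite Ic in le1 => le2.
have If := integrable_fin_num mOm iGu.
have mAf : mu A \is a fin_num.
  rewrite ge0_fin_numE ?measure_ge0 //; apply: le_lt_trans finOm.
  by apply: le_measure; rewrite ?inE.
have := le_trans le2 le1.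
rewrite -(fineK If) -(fineK mAf) -EFinM -EFinB lee_fin => H.
have m0 : 0 <= fine (mu A) by apply: fine_ge0; exact: measure_ge0.
have -> : mu A = (fine (mu A))%:E by rewrite fineK.
have -> : fine (mu A) = 0 by nra.
by [].
Qed.
End Core.

Unset Implicit Arguments. Set Strict Implicit.


Theorem mainTheorem5 (d : measure_display) (T : measurableType d) (R : realType)
  (mu : {measure set T -> \bar R}) (Om : set T)
  (mOm : measurable Om) (finOm : (mu Om < +oo)%E)
  (lam : nat -> R) (lam_pos : forall n, 0 < lam n)
  (lam_incr : forall n, lam n < lam n.+1)
  (xd : T -> R) (xdL2 : inL2 mu Om xd)
  (E : set T) (mE : measurable E) (EOm : E `<=` Om) (Epos : (0 < mu E)%E)
  (xdE : forall t, E t -> 0 <= xd t < expR (-1))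
  (u x : nat -> T -> R) (hit : MHDM_iterates mu Om lam xd u x) :
  {ae mu, forall t, E t -> xd t < x 0%N t /\ forall n, x n t < x n.+1 t}.
Proof.
have [hu0 [hx0 [hun hxS]]] := hit.
have ixn : forall n, inL2 mu Om (x n).
  elim=> [|n IH]; first by rewrite hx0; exact: hu0.1.
  by rewrite hxS; have H := inL2D mOm IH (hun n).1; exact H.
pose hs n := fun t => xd t - x n t.
have ihs : forall n, inL2 mu Om (hs n) := fun n => inL2D mOm xdL2 (inL2N mOm (ixn n)).
have min0 : isMinL2 mu Om (Fn mu Om (lam 0%N) xd) (u 0%N) := hu0.
have minS : forall n, isMinL2 mu Om (Fn mu Om (lam n.+1) (hs n)) (u n.+1).
  move=> n; suff -> : Fn mu Om (lam n.+1) (hs n) =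
     (fun v => ((lam n.+1 / 2)%:E * L2sq mu Om (fun t => (xd t - x n t - v t)%R)
                   + entropyS mu Om v)%E) by exact: hun n.
  apply: funext => v; rewrite /Fn /L2sq; congr (_ * _ + _)%E.
  by apply: eq_integral => t _; congr EFin; rewrite /hs; ring.
pose e1 : R := expR (-1).
pose Z n k := Om `&` [set t | (u n.+1 t == 0) && (`|hs n t| <= k%:R)].
have nZ : forall n k, mu.-negligible (Z n k).
  move=> n k.
  have mZ : measurable (Z n k).
    apply: mset_bool => //; apply: measurable_and.
      exact: measurable_fun_eqr (hun n).1.1 (measurable_cst _).
    apply: measurable_fun_ler (measurable_cst _).
    have H1 := (ihs n).1; have H2 := @normr_measurable R setT; exact: (measurableT_comp H2 H1).
  apply/negligibleP => //.
  apply: (perturb mOm finOm (eps := expR (-(lam n.+1 / 2 + lam n.+1 * k%:R + 1))))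
    (lam_pos _) (ihs n) (minS n) mZ _ (expR_gt0 _) (expR_gt0 _) _.
    by move=> t [].
  move=> t [Ot /andP[/eqP u0 hk]]; rewrite /Gi.
  exact: pt_zero (lam_pos _) hk u0.
pose Ak k := E `&` (Om `&` [set t | ((0 <= u 0%N t) && (u 0%N t <= xd t))
                                  && (xd t <= e1 - k.+1%:R^-1)]).
have nA : forall k, mu.-negligible (Ak k).
  move=> k.
  have mU := (hu0.1).1.
  have mA : measurable (Ak k).
    apply: measurableI => //; apply: mset_bool => //; apply: measurable_and.
      apply: measurable_and.
        exact: measurable_fun_ler (measurable_cst _) mU.
      exact: measurable_fun_ler mU xdL2.1.
    exact: measurable_fun_ler xdL2.1 (measurable_cst _).
  have dp : 0 < k.+1%:R^-1 :> R by rewrite invr_gt0.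
  have ep : 0 < k.+1%:R^-1 / (2 * (1 + lam 0%N)) :> R.
    by rewrite divr_gt0 //; have := lam_pos 0%N; lra.
  apply/negligibleP => //.
  apply: (perturb mOm finOm (eps := k.+1%:R^-1 / (2 * (1 + lam 0%N)))
     (c := k.+1%:R^-1 / (2 * (1 + lam 0%N)) * k.+1%:R^-1 / 4))
    (lam_pos _) xdL2 min0 mA _ (ep) _ _.
  - by move=> t [_ []].
  - by apply: divr_gt0 => //; apply: divr_gt0 => //; exact: ep.
  move=> t [Et [Ot /andP[/andP[h1 h2] h3]]]; rewrite /Gi.
  exact: pt_pos (lam_pos _) dp h1 h2 h3.
have n0 := min_ae mOm finOm (lam_pos 0%N) xdL2 min0.
have nS := fun n => min_ae mOm finOm (lam_pos n.+1) (ihs n) (minS n).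
have NN : mu.-negligible (((\bigcup_k Ak k) `|` (~` [set t | Om t -> 0 <= u 0%N t]))
   `|` (\bigcup_n \bigcup_k Z n k) `|` (\bigcup_n (~` [set t | Om t -> 0 <= u n.+1 t]))).
  apply: negligibleU; first apply: negligibleU; first apply: negligibleU.
  - exact: negligible_bigcup.
  - exact: n0.
  - by apply: negligible_bigcup => n; exact: negligible_bigcup.
  - exact: negligible_bigcup.
apply: negligibleS NN => t; apply: contra_notP => tU Et.
have Ot := EOm t Et.
have [xd0 xde] := andP (xdE t Et).
split.
  rewrite hx0; have [//|le] := ltP (xd t) (u 0%N t).
  exfalso; apply: tU; left; left.
  have [neg|nn] := ltP (u 0%N t) 0.
    by right => /(_ Ot); rewrite leNgt neg.
  have [k hk] := ltr_add_invr xde.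
  left; exists k => //; split => //; split => //.
  rewrite /= nn le /=; rewrite /e1 lerBrDr; exact: ltW.
move=> n; rewrite hxS /= ltrDl.
have [//|le] := ltP 0 (u n.+1 t).
exfalso; apply: tU.
have [neg|nn] := ltP (u n.+1 t) 0.
  by right; exists n => // /(_ Ot); rewrite leNgt neg.
left; right; exists n => //; exists (Num.Def.archi_bound `|hs n t|) => //.
split => //; apply/andP; split; first by apply/eqP; apply: le_anti; rewrite le nn.
exact: ltW (archi_boundP (normr_ge0 _)).
Qed.
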